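(* Let $n\ge 2$ and $1\le m\le n-1$. Write $g\in \mathrm{SO}(n)$ as a block matrix $g=\begin{pmatrix}P&Q\\ R&T\end{pmatrix}$ with blocks of sizes $(m+(n-m))\times(m+(n-m))$, and define (for all $g$ with $\det(1+P)\neq 0$, i.e. almost everywhere) $$\Upsilon^m(g)=T-R(1+P)^{-1}Q .$$ Then: (a) $\Upsilon^m$ maps $\mathrm{SO}(n)$ (where defined) into $\mathrm{SO}(n-m)$; (b) for $k,m\ge 1$ with $k+m\le n-1$ one has $\Upsilon^k\circ\Upsilon^m=\Upsilon^{k+m}$ (wherever both sides are defined), where $\Upsilon^k$ on the right of the composition is the analogous map $\mathrm{SO}(n-m)\to\mathrm{SO}(n-m-k)$; (c) for $1\le p\le n-1$, if $g\in\mathrm{SO}(n)$ is such that $1+g$ is invertible and $\Upsilon^{n-p}(g)$ is defined, and $S=(g-1)(g+1)^{-1}$, then $$\{S\}_p=\big(\Upsilon^{n-p}(g)-1\big)\big(\Upsilon^{n-p}(g)+1\big)^{-1},$$ where $\{S\}_p$ denotes the lower right $p\times p$ corner of $S$.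
   Context: For a matrix $A$, $\{A\}_p$ denotes its lower right $p\times p$ corner. *)

(* Defs.v *)
From HB Require Import structures.
From mathcomp Require Import all_boot all_order all_algebra.
Set Implicit Arguments. Unset Strict Implicit. Unset Printing Implicit Defensive.
Import Order.TTheory GRing.Theory Num.Theory.
Local Open Scope ring_scope.

Definition is_SO (R : realFieldType) (n : nat) (g : 'M[R]_n) : Prop :=
  g *m g^T = 1%:M /\ \det g = 1.

Definition UpsDefined (R : realFieldType) (m l : nat) (g : 'M[R]_(m + l)) : Prop :=
  (1%:M + ulsubmx g) \in unitmx.

Definition Upsilon (R : realFieldType) (m l : nat) (g : 'M[R]_(m + l)) : 'M[R]_l :=
  drsubmx g - dlsubmx g *m invmx (1%:M + ulsubmx g) *m ursubmx g.

Definition corner (R : realFieldType) (q p : nat) (A : 'M[R]_(q + p)) : 'M[R]_p :=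
  drsubmx A.

(* Main.v *)
Require Import Defs.
From HB Require Import structures.
From mathcomp Require Import all_boot all_order all_algebra.
Import Order.TTheory GRing.Theory Num.Theory.
Local Open Scope ring_scope.

Set Implicit Arguments. Unset Strict Implicit.
Section S.
Variable R : realFieldType.

Lemma castmx_mulmx a b p (e : a = b) (A : 'M[R]_a) (B : 'M[R]_(a,p)) :
  castmx (e,e) A *m castmx (e, erefl p) B = castmx (e, erefl p) (A *m B).
Proof. by case: b / e; rewrite !castmx_id. Qed.

Definition UX m l (g : 'M[R]_(m + l)) : 'M[R]_(m, l) :=
  - (invmx (1%:M + ulsubmx g) *m ursubmx g).

Lemma ups_col m l (g : 'M[R]_(m + l)) : UpsDefined g ->
  g *m col_mx (UX g) 1%:M = col_mx (- UX g) (Upsilon g).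
Proof.
move=> hu; rewrite -{1}(submxK g) mul_block_col /UX /Upsilon !mulmx1 opprK.
congr col_mx; last by rewrite mulmxN mulmxA addrC.
have h : ulsubmx g *m invmx (1%:M + ulsubmx g) = 1%:M - invmx (1%:M + ulsubmx g).
  by rewrite -[X in X - _](mulmxV hu) mulmxDl mul1mx addrAC subrr add0r.
by rewrite mulmxN mulmxA h mulmxBl mul1mx opprB addrNK.
Qed.

Lemma ups_uniq m l (g : 'M[R]_(m + l)) X U : UpsDefined g ->
  g *m col_mx X 1%:M = col_mx (- X) U -> U = Upsilon g.
Proof.
move=> hu; rewrite -{1}(submxK g) mul_block_col !mulmx1 => /eq_col_mx [h1 h2].
have hX : X = - (invmx (1%:M + ulsubmx g) *m ursubmx g).
  have e : (1%:M + ulsubmx g) *m X = - ursubmx g.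
    have hPX : ulsubmx g *m X = - X - ursubmx g by rewrite -h1 addrK.
    by rewrite mulmxDl mul1mx hPX addrA subrr add0r.
  by rewrite -mulmxN -e mulKmx.
by rewrite -h2 hX /Upsilon mulmxN mulmxA addrC.
Qed.

Lemma partA m l (g : 'M[R]_(m + l)) : is_SO g -> UpsDefined g -> is_SO (Upsilon g).
Proof.
move=> [hg hd] hu.
have hgt : g^T *m g = 1%:M by apply: mulmx1C.
have hc := ups_col hu.
set X := UX g in hc; set U := Upsilon g in hc *.
split.
  apply: mulmx1C.
  have e1 : (col_mx X 1%:M)^T *m col_mx X 1%:M = (col_mx (-X) U)^T *m col_mx (-X) U.
    by rewrite -hc trmx_mul mulmxA -(mulmxA _ g^T) hgt mulmx1.
  move: e1; rewrite !tr_col_mx !mul_row_col trmx1 mul1mx.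
  have hN : (- X)^T = - X^T by apply/matrixP => i j; rewrite !mxE.
  by rewrite hN mulNmx mulmxN opprK => /addrI ->.
set P := ulsubmx g; set Q := ursubmx g; set Rr := dlsubmx g; set T := drsubmx g.
have hU : U = T - Rr *m invmx (1%:M + P) *m Q by [].
set M := block_mx (1%:M + P) Q Rr T.
have e1 : M = block_mx 1%:M 0 (Rr *m invmx (1%:M + P)) 1%:M *m block_mx (1%:M + P) Q 0 U.
  rewrite mulmx_block !mul1mx ?mul0mx ?mulmx0 ?addr0 ?add0r mulmxKV //.
  by rewrite /M hU addrCA subrr addr0.
have e2 : g^T *m M = block_mx (1%:M + P^T) 0 Q^T 1%:M.
  have -> : M = g + block_mx 1%:M 0 0 0.
    by rewrite /M -{1}(submxK g) add_block_mx !addr0 (addrC P).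
  rewrite mulmxDr hgt -(submxK g) tr_block_mx mulmx_block !mulmx0 !mulmx1 !addr0.
  by rewrite (scalar_mx_block m l) add_block_mx !addr0 !add0r.
have d1 : \det M = \det (1%:M + P) * \det U.
  by rewrite e1 det_mulmx det_lblock det_ublock !det1 !mul1r.
have d2 : \det M = \det (1%:M + P).
  have := congr1 determinant e2; rewrite det_mulmx det_tr hd mul1r => ->.
  by rewrite det_lblock det1 mulr1 -det_tr linearD /= trmx1 trmxK.
move: hu; rewrite /UpsDefined unitmxE unitfE -/P => hnz.
by apply: (mulfI hnz); rewrite -d1 d2 mulr1.
Qed.

Lemma partB k m l (g : 'M[R]_(m + (k + l))) :
  UpsDefined g -> UpsDefined (Upsilon g) ->
  UpsDefined (castmx (addnA m k l, addnA m k l) g) ->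
  Upsilon (Upsilon g) = Upsilon (castmx (addnA m k l, addnA m k l) g).
Proof.
move=> hu1 hu2 hu3.
have hc1 := ups_col hu1; have hc2 := ups_col hu2.
set X1 := UX g in hc1; set U1 := Upsilon g in hc1 hc2 *.
set X2 := UX U1 in hc2; set U2 := Upsilon U1 in hc2 *.
set Z := X1 *m col_mx X2 1%:M.
apply: (ups_uniq (X := col_mx Z X2)) => //.
have hv : col_mx (col_mx Z X2) 1%:M = castmx (addnA m k l, erefl l) (col_mx Z (col_mx X2 1%:M)).
  by rewrite col_mxA castmx_comp castmx_id.
rewrite hv castmx_mulmx.
have -> : col_mx Z (col_mx X2 1%:M) = col_mx X1 1%:M *m col_mx X2 1%:M.
  by rewrite mul_col_mx mul1mx.
rewrite mulmxA hc1 mul_col_mx hc2 mulNmx -/Z.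
by rewrite col_mxA castmx_comp castmx_id opp_col_mx.
Qed.

Lemma partC q p (g : 'M[R]_(q + p)) :
  (g + 1%:M) \in unitmx -> UpsDefined g ->
  corner ((g - 1%:M) *m invmx (g + 1%:M)) = (Upsilon g - 1%:M) *m invmx (Upsilon g + 1%:M).
Proof.
move=> hg hu.
have hc := ups_col hu.
set X := UX g in hc; set U := Upsilon g in hc *.
have h1 : (g + 1%:M) *m col_mx X 1%:M = col_mx 0 (U + 1%:M).
  by rewrite mulmxDl mul1mx hc add_col_mx addNr.
set G := invmx (g + 1%:M).
have h2 : col_mx X 1%:M = G *m col_mx 0 (U + 1%:M) by rewrite -h1 mulKmx.
have hD : drsubmx G *m (U + 1%:M) = 1%:M.
  rewrite -(submxK G) mul_block_col !mulmx0 !add0r in h2.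
  by case/eq_col_mx: h2 => _ /esym.
have hUu : (U + 1%:M) \in unitmx by case: (mulmx1_unit hD).
have hinv : invmx (U + 1%:M) = drsubmx G.
  by have := congr1 (mulmx^~ (invmx (U + 1%:M))) hD; rewrite -mulmxA mulmxV // mulmx1 mul1mx => ->.
have eS : (g - 1%:M) *m G = 1%:M - G - G.
  by rewrite mulmxBl mul1mx -{1}(addrK 1%:M g) mulmxBl mul1mx mulmxV.
rewrite eS hinv /corner -(submxK G) (scalar_mx_block q p) !opp_block_mx !add_block_mx block_mxKdr.
have e : U - 1%:M = (U + 1%:M) - 1%:M - 1%:M by rewrite addrK.
rewrite e !mulmxBl mul1mx (mulmx1C hD). by rewrite block_mxKdr.
Qed.
End S.

Theorem proposition2p1 (R : realFieldType) :
  (* (a): n = m + l with 1 <= m <= n - 1, i.e. m >= 1, l >= 1 *)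
  (forall (m l : nat) (g : 'M[R]_(m + l)),
      (0 < m)%N -> (0 < l)%N ->
      is_SO g -> UpsDefined g -> is_SO (Upsilon g)) /\
  (* (b): n = m + (k + l), k, m >= 1, k + m <= n - 1 i.e. l >= 1 *)
  (forall (k m l : nat) (g : 'M[R]_(m + (k + l))),
      (0 < k)%N -> (0 < m)%N -> (0 < l)%N ->
      is_SO g ->
      UpsDefined g ->
      UpsDefined (Upsilon g) ->
      UpsDefined (castmx (addnA m k l, addnA m k l) g) ->
      Upsilon (Upsilon g) = Upsilon (castmx (addnA m k l, addnA m k l) g)) /\
  (* (c): n = q + p, q = n - p, 1 <= p <= n - 1 *)
  (forall (q p : nat) (g : 'M[R]_(q + p)),
      (0 < q)%N -> (0 < p)%N ->
      is_SO g -> (g + 1%:M) \in unitmx -> UpsDefined g ->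
      let S := (g - 1%:M) *m invmx (g + 1%:M) in
      corner S = (Upsilon g - 1%:M) *m invmx (Upsilon g + 1%:M)).
Proof.
split; first by move=> m l g _ _; exact: partA.
split; first by move=> k m l g _ _ _ _; exact: partB.
by move=> q p g _ _ _; exact: partC.
Qed.
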